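(* Let $L$ be a real vector space endowed with a preorder $\le$, let $C\subset L$ be nonempty and $M\subset C$ a nonempty linear subspace such that: $C$ is exhaustive (for every $X\in L$ there is $X_0\in C$ with $X_0\ge X$); $X+m\in C$ for all $X\in C$, $m\in M$; and $X+m\le Y+m$ for all $m\in M$ and $X,Y\in L$ with $X\le Y$. Let $H\colon C\to\mathbb{R}$ be a premium principle and define $$R_{\mathrm{Max}}(X):=\inf\{H(X_0)\mid X_0\in C,\ X_0\ge X\},\quad X\in L.$$ Then $R_{\mathrm{Max}}\colon L\to\mathbb{R}$ is a risk measure with $R_{\mathrm{Max}}(X)\le H(X)$ for all $X\in C$ and $R_{\mathrm{Max}}(m)=H(m)$ for all $m\in M$. In particular, $D_{\mathrm{Min}}(X):=H(X)-R_{\mathrm{Max}}(X)$, $X\in C$, is a deviation measure and $H=R_{\mathrm{Max}}+D_{\mathrm{Min}}$ on $C$. Moreover, if $R\colon L\to\mathbb{R}$ is a risk measure and $D\colon C\to\mathbb{R}$ a deviation measure with $H(X)=R(X)+D(X)$ for all $X\in C$, then $R(X)\le R_{\mathrm{Max}}(X)$ for all $X\in L$ and $D(X)\ge D_{\mathrm{Min}}(X)$ for all $X\in C$.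
   Context: A premium principle is a map $H\colon C\to\mathbb{R}$ with (P1') $H(X+m)=H(X)+H(m)$ for all $X\in C$, $m\in M$; (P2') $H(0)=0$ and $H(X)\ge0$ for all $X\in C$ with $X\ge0$; (P3') $\inf\{H(X_0)\mid X_0\in C,\ X_0\ge X\}>-\infty$ for all $X\in L$. A risk measure is a map $R\colon L\to\mathbb{R}$ with $R(X+m)=R(X)+R(m)$ for all $X\in C$, $m\in M$, and $R(0)=0$, $R(X)\le R(Y)$ for all $X,Y\in L$ with $X\le Y$. A deviation measure is a map $D\colon C\to\mathbb{R}$ with $D(X+m)=D(X)$ for all $X\in C$, $m\in M$, $D(0)=0$, and $D(X)\ge0$ for all $X\in C$. *)

(* Defs.v *)
From HB Require Import structures.
From mathcomp Require Import all_boot all_order all_algebra.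
From mathcomp Require Import all_classical all_reals.
Set Implicit Arguments. Unset Strict Implicit. Unset Printing Implicit Defensive.
Import Order.TTheory GRing.Theory Num.Theory.
Local Open Scope ring_scope.
Local Open Scope classical_set_scope.

Section Defs.
Variables (R : realType) (L : lmodType R).

Definition preorder_rel (le : L -> L -> Prop) : Prop :=
  (forall X, le X X) /\ (forall X Y Z, le X Y -> le Y Z -> le X Z).

Definition linear_subspace (M : set L) : Prop :=
  M 0 /\ (forall x y, M x -> M y -> M (x + y)) /\
  (forall (a : R) x, M x -> M (a *: x)).

Definition exhaustive (le : L -> L -> Prop) (C : set L) : Prop :=
  forall X, exists X0, C X0 /\ le X X0.

Definition upper_values (le : L -> L -> Prop) (C : set L) (H : L -> R) (X : L)
  : set R := [set H X0 | X0 in [set X0 | C X0 /\ le X X0]].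

(* H : C -> R is represented by a total map whose values off C are irrelevant *)
Definition premium_principle (le : L -> L -> Prop) (C M : set L) (H : L -> R)
  : Prop :=
  (forall X m, C X -> M m -> H (X + m) = H X + H m) /\
  (H 0 = 0 /\ forall X, C X -> le 0 X -> 0 <= H X) /\
  (forall X, exists b : R, forall X0, C X0 -> le X X0 -> b <= H X0).

Definition risk_measure (le : L -> L -> Prop) (C M : set L) (Rm : L -> R)
  : Prop :=
  (forall X m, C X -> M m -> Rm (X + m) = Rm X + Rm m) /\
  Rm 0 = 0 /\ (forall X Y, le X Y -> Rm X <= Rm Y).

Definition deviation_measure (C M : set L) (D : L -> R) : Prop :=
  (forall X m, C X -> M m -> D (X + m) = D X) /\
  D 0 = 0 /\ (forall X, C X -> 0 <= D X).

Definition R_Max (le : L -> L -> Prop) (C : set L) (H : L -> R) (X : L) : R :=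
  inf (upper_values le C H X).

Definition D_Min (le : L -> L -> Prop) (C : set L) (H : L -> R) (X : L) : R :=
  H X - R_Max le C H X.

End Defs.

(* Main.v *)
Require Import Defs.
From HB Require Import structures.
From mathcomp Require Import all_boot all_order all_algebra.
From mathcomp Require Import all_classical all_reals.
From mathcomp Require Import ring lra.
Import Order.TTheory GRing.Theory Num.Theory.
Local Open Scope ring_scope.
Local Open Scope classical_set_scope.

Section Helpers.
Variables (R : realType) (L : lmodType R) (le : L -> L -> Prop)
  (C : set L) (H : L -> R).

Lemma RM_le X X0 : (forall X, exists b : R, forall X0, C X0 -> le X X0 -> b <= H X0) ->
  C X0 -> le X X0 -> R_Max le C H X <= H X0.
Proof.
move=> hb CX0 le0; rewrite /R_Max.
have hl : has_lbound (upper_values le C H X).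
  have [b hb'] := hb X; exists b => _ [Y [CY lY] <-]; exact: hb'.
by apply: (ge_inf hl); exists X0.
Qed.

Lemma RM_ge X b : exhaustive le C ->
  (forall X0, C X0 -> le X X0 -> b <= H X0) -> b <= R_Max le C H X.
Proof.
move=> ex hb; rewrite /R_Max; apply: lb_le_inf.
  have [X0 [CX0 l0]] := ex X; by exists (H X0); exists X0.
by move=> _ [Y [CY lY] <-]; exact: hb.
Qed.
End Helpers.

Theorem theorem4p6 (R : realType) (L : lmodType R) (le : L -> L -> Prop)
  (C M : set L) (H : L -> R) :
  preorder_rel le ->
  (exists X, C X) ->
  linear_subspace M ->
  M `<=` C ->
  exhaustive le C ->
  (forall X m, C X -> M m -> C (X + m)) ->
  (forall m X Y, M m -> le X Y -> le (X + m) (Y + m)) ->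
  premium_principle le C M H ->
  risk_measure le C M (R_Max le C H) /\
      (forall X, C X -> R_Max le C H X <= H X) /\
      (forall m, M m -> R_Max le C H m = H m) /\
      deviation_measure C M (D_Min le C H) /\
      (forall X, C X -> H X = R_Max le C H X + D_Min le C H X) /\
      (forall (Rm D : L -> R), risk_measure le C M Rm -> deviation_measure C M D ->
         (forall X, C X -> H X = Rm X + D X) ->
         (forall X, Rm X <= R_Max le C H X) /\
         (forall X, C X -> D_Min le C H X <= D X)).
Proof.
move=> [refl trans] _ [M0 [MD MZ]] MC ex CM leM [HD [[H0 Hpos] Hb]].
have MN m : M m -> M (- m) by move=> Mm; rewrite -scaleN1r; exact: MZ.
have shift X m : M m -> R_Max le C H (X + m) = R_Max le C H X + H m.
  move=> Mm; apply/eqP; rewrite eq_le; apply/andP; split.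
    rewrite -lerBlDr; apply: RM_ge => // X0 CX0 l0.
    rewrite lerBlDr -HD //; apply: RM_le => //; [exact: CM | exact: leM].
  apply: RM_ge => // Y0 CY0 l0.
  have CX0 : C (Y0 + - m) by apply: CM => //; exact: MN.
  have -> : Y0 = (Y0 + - m) + m by rewrite addrNK.
  rewrite HD // lerD2r; apply: RM_le => //.
  by have := leM _ _ _ (MN _ Mm) l0; rewrite addrK.
have R0 : R_Max le C H 0 = 0.
  apply/eqP; rewrite eq_le; apply/andP; split.
    by rewrite -[X in _ <= X]H0; apply: RM_le => //; exact: MC.
  by apply: RM_ge => // X0 CX0 l0; exact: Hpos.
have RmH m : M m -> R_Max le C H m = H m by move=> Mm; have := shift 0 m Mm; rewrite !add0r R0 add0r.
have RleH X : C X -> R_Max le C H X <= H X by move=> CX; exact: RM_le.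
split; [|split; [exact: RleH|split; [exact: RmH|split; [|split]]]].
- split; [move=> X m _ Mm; by rewrite shift // (RmH m Mm)|split; first exact: R0].
  move=> X Y lXY; apply: RM_ge => // Y0 CY0 lY0; apply: RM_le => //.
  exact: trans lY0.
- rewrite /D_Min; split; [|split].
  + by move=> X m CX Mm; rewrite HD // shift //; ring.
  + by rewrite H0 R0 subr0.
  + by move=> X CX; rewrite subr_ge0; exact: RleH.
- by move=> X _; rewrite /D_Min addrC subrK.
- move=> Rm D [_ [_ Rmon]] [_ [_ Dpos]] HRD.
  have h1 X : Rm X <= R_Max le C H X.
    apply: RM_ge => // X0 CX0 l0; rewrite HRD //.
    apply: le_trans (Rmon _ _ l0) _; rewrite lerDl; exact: Dpos.
  split => // X CX; rewrite /D_Min HRD //; have := h1 X; lra.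
Qed.
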